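(* Let $N\ge3$, $h=1/N$, $\rho_j=jh$, $I_j=[\rho_{j-1},\rho_j]$ ($j=1,\dots,N$, with $\rho_0\equiv\rho_N$ on $\mathbb{T}=\mathbb{R}/\mathbb{Z}$), and let $\mathbb{K}^h$ be the space of continuous periodic functions on $\mathbb{T}$ that are linear on each $I_j$. Let $(\boldsymbol{X}^h(\cdot,t),V^h(\cdot,t),\kappa^h(\cdot,t))\in[\mathbb{K}^h]^2\times\mathbb{K}^h\times\mathbb{K}^h$, $t\ge0$ (differentiable in $t$, with all segment lengths $|\boldsymbol{h}_j(t)|>0$), be a solution of: for all $t\ge0$, $$\big(\boldsymbol{n}^h\cdot\partial_t\boldsymbol{X}^h,\phi^h\big)^h_{\Gamma^h(t)}=\big(V^h,\phi^h\big)^h_{\Gamma^h(t)}\quad\forall\phi^h\in\mathbb{K}^h,$$ $$\big(V^h\boldsymbol{n}^h,\boldsymbol{\omega}^h\big)^h_{\Gamma^h(t)}=\Big(-\partial_s\kappa^h\,\boldsymbol{n}^h+\tfrac12(\kappa^h)^2\partial_s\boldsymbol{X}^h,\,\partial_s\boldsymbol{\omega}^h\Big)^h_{\Gamma^h(t)}\quad\forall\boldsymbol{\omega}^h\in[\mathbb{K}^h]^2,$$ $$\big(\partial_t\kappa^h,\psi^h\big)^h_{\Gamma^h(t)}=\big(\boldsymbol{n}^h\cdot\partial_s(\partial_t\boldsymbol{X}^h),\partial_s\psi^h\big)^h_{\Gamma^h(t)}-\big((\partial_s\boldsymbol{X}^h\cdot\partial_s(\partial_t\boldsymbol{X}^h))\,\kappa^h,\psi^h\big)^h_{\Gamma^h(t)}\quad\forall\psi^h\in\mathbb{K}^h,$$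 with initial data $\boldsymbol{X}^h(\cdot,0)=\boldsymbol{X}^h_0$, $\kappa^h(\cdot,0)=\kappa^h_0$. Then the discrete Willmore energy $$W^h(t):=\tfrac12\big((\kappa^h(\cdot,t))^2,1\big)^h_{\Gamma^h(t)}=\tfrac14\sum_{j=1}^N|\boldsymbol{h}_j(t)|\Big[(\kappa^h(\rho_{j-1},t))^2+(\kappa^h(\rho_j,t))^2\Big]$$ satisfies $W^h(t)\le W^h(t')\le W^h(0)$ for all $t\ge t'\ge0$, where $W^h(0)=\tfrac14\sum_{j=1}^N|\boldsymbol{h}_{0,j}|\big[(\kappa^h_0(\rho_{j-1}))^2+(\kappa^h_0(\rho_j))^2\big]$ with $\boldsymbol{h}_{0,j}=\boldsymbol{X}^h_0(\rho_j)-\boldsymbol{X}^h_0(\rho_{j-1})$.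
   Context: For $\boldsymbol{X}^h\in[\mathbb{K}^h]^2$, the polygon $\Gamma^h=\boldsymbol{X}^h(\mathbb{T})$ has edges $\boldsymbol{h}_j=\boldsymbol{X}^h(\rho_j)-\boldsymbol{X}^h(\rho_{j-1})$. For $u^h\in\mathbb{K}^h$ (or $[\mathbb{K}^h]^2$), the discrete arc-length derivative is the piecewise constant $\partial_s u^h|_{I_j}=\frac{u^h(\rho_j)-u^h(\rho_{j-1})}{|\boldsymbol{h}_j|}$. Discrete tangent and normal: $\boldsymbol{\tau}^h|_{I_j}=\partial_s\boldsymbol{X}^h|_{I_j}=\boldsymbol{h}_j/|\boldsymbol{h}_j|$, $\boldsymbol{n}^h|_{I_j}=-\boldsymbol{h}_j^\perp/|\boldsymbol{h}_j|$ with $(u_1,u_2)^\perp=(-u_2,u_1)$. Mass-lumped inner product for piecewise continuous (scalar or vector) $u,v$: $(u,v)^h_{\Gamma^h}=\frac12\sum_{j=1}^N|\boldsymbol{h}_j|\big[(u\cdot v)(\rho_{j-1}^+)+(u\cdot v)(\rho_j^-)\big]$, where one-sided limits are taken within $I_j$. *)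

(* Defs.v *)
From Stdlib Require Import Reals Lra.
From Coquelicot Require Import Coquelicot.
Open Scope R_scope.

(* Elements of K^h (continuous periodic P1 functions on T with nodes
   rho_j = j/N) are represented by their nodal values u : nat -> R, where
   u j = u^h(rho_j); only j mod N matters (periodicity rho_0 = rho_N). *)
Definition nd (N : nat) (u : nat -> R) (j : nat) : R := u (j mod N).

(* A piecewise continuous function on the mesh, described by its one-sided
   limits on each interval: f k false = f(rho_k^+), f k true = f(rho_{k+1}^-)
   on the interval I_{k+1} = [rho_k, rho_{k+1}], k = 0..N-1. *)
Definition PW := nat -> bool -> R.

Definition lift (N : nat) (u : nat -> R) : PW :=
  fun k b => if b then nd N u (S k) else nd N u k.

(* components of the edge vector h_{k+1} = X(rho_{k+1}) - X(rho_k) *)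
Definition hcomp (N : nat) (Xi : nat -> R) (k : nat) : R :=
  nd N Xi (S k) - nd N Xi k.

Definition elen (N : nat) (X1 X2 : nat -> R) (k : nat) : R :=
  sqrt (hcomp N X1 k ^ 2 + hcomp N X2 k ^ 2).

Definition ds (N : nat) (X1 X2 : nat -> R) (u : nat -> R) : PW :=
  fun k _ => (nd N u (S k) - nd N u k) / elen N X1 X2 k.

(* discrete normal n^h = - h^perp / |h| with (u1,u2)^perp = (-u2,u1),
   i.e. n^h = (h_2, -h_1)/|h| *)
Definition nrm1 (N : nat) (X1 X2 : nat -> R) : PW :=
  fun k _ => hcomp N X2 k / elen N X1 X2 k.
Definition nrm2 (N : nat) (X1 X2 : nat -> R) : PW :=
  fun k _ => - hcomp N X1 k / elen N X1 X2 k.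

(* mass-lumped integral over Gamma^h of a piecewise continuous scalar
   (the integrand u.v is passed already multiplied out):
   (u,v)^h = 1/2 sum_{j=1}^N |h_j| [ (u.v)(rho_{j-1}^+) + (u.v)(rho_j^-) ] *)
Definition lump (N : nat) (X1 X2 : nat -> R) (f : PW) : R :=
  sum_f_R0 (fun k => / 2 * elen N X1 X2 k * (f k false + f k true)) (pred N).

Definition pmul (f g : PW) : PW := fun k b => f k b * g k b.
Definition padd (f g : PW) : PW := fun k b => f k b + g k b.
Definition psub (f g : PW) : PW := fun k b => f k b - g k b.
Definition pscal (c : R) (f : PW) : PW := fun k b => c * f k b.
Definition popp (f : PW) : PW := fun k b => - f k b.
Definition pone : PW := fun _ _ => 1.

Definition Wh (N : nat) (X1 X2 kap : nat -> R) : R :=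
  / 2 * lump N X1 X2 (pmul (pmul (lift N kap) (lift N kap)) pone).

(* Main.v *)
Require Import Defs.
From Stdlib Require Import Reals.
From Coquelicot Require Import Coquelicot.
Open Scope R_scope.

From Stdlib Require Import Lra Lia FunctionalExtensionality.

Lemma Dplus (f g : R -> R) x a b : is_derive f x a -> is_derive g x b ->
  is_derive (fun s => f s + g s) x (a + b).
Proof. intros; now apply (is_derive_plus f g). Qed.
Lemma Dminus (f g : R -> R) x a b : is_derive f x a -> is_derive g x b ->
  is_derive (fun s => f s - g s) x (a - b).
Proof. intros; now apply (is_derive_minus f g). Qed.
Lemma Dmult (f g : R -> R) x a b : is_derive f x a -> is_derive g x b ->
  is_derive (fun s => f s * g s) x (a * g x + f x * b).
Proof. intros; apply (is_derive_mult f g); auto. intros; apply Rmult_comm. Qed.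
Lemma Dconst (c x : R) : is_derive (fun _ => c) x 0.
Proof. apply (is_derive_const (K:=R_AbsRing) (V:=R_NormedModule)). Qed.

Lemma Lplus {T} (F : (T -> Prop) -> Prop) {FF : Filter F} (f g : T -> R) a b :
  filterlim f F (locally a) -> filterlim g F (locally b) ->
  filterlim (fun s => f s + g s) F (locally (a + b)).
Proof. intros; eapply filterlim_comp_2; eauto. apply (filterlim_plus a b). Qed.
Lemma Lopp {T} (F : (T -> Prop) -> Prop) {FF : Filter F} (g : T -> R) b :
  filterlim g F (locally b) -> filterlim (fun s => - g s) F (locally (- b)).
Proof. intros; eapply filterlim_comp; eauto. apply (filterlim_opp b). Qed.
Lemma Lminus {T} (F : (T -> Prop) -> Prop) {FF : Filter F} (f g : T -> R) a b :
  filterlim f F (locally a) -> filterlim g F (locally b) ->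
  filterlim (fun s => f s - g s) F (locally (a - b)).
Proof. intros; apply Lplus; auto. apply Lopp; auto. Qed.
Lemma Lmult {T} (F : (T -> Prop) -> Prop) {FF : Filter F} (f g : T -> R) a b :
  filterlim f F (locally a) -> filterlim g F (locally b) ->
  filterlim (fun s => f s * g s) F (locally (a * b)).
Proof. intros; eapply filterlim_comp_2; eauto. apply (filterlim_mult a b). Qed.
Lemma Lconst {T} (F : (T -> Prop) -> Prop) {FF : Filter F} (c : R) :
  filterlim (fun _ : T => c) F (locally c).
Proof. apply filterlim_const. Qed.
Lemma Lsqrt {T} (F : (T -> Prop) -> Prop) {FF : Filter F} (f : T -> R) a :
  filterlim f F (locally a) -> 0 <= a -> 
  filterlim (fun s => sqrt (f s)) F (locally (sqrt a)).
Proof. intros. eapply filterlim_comp; eauto. apply continuity_pt_filterlim.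
  now apply continuity_pt_sqrt. Qed.

Lemma Dsum (F : R -> nat -> R) (d : nat -> R) t n :
  (forall k, (k <= n)%nat -> is_derive (fun s => F s k) t (d k)) ->
  is_derive (fun s => sum_f_R0 (F s) n) t (sum_f_R0 d n).
Proof. induction n; intros H; simpl. apply H; auto.
  apply Dplus. apply IHn; auto. apply H; auto. Qed.

Lemma Lsum {T} (G : (T -> Prop) -> Prop) {FF : Filter G} (F : T -> nat -> R) (l : nat -> R) n :
  (forall k, (k <= n)%nat -> filterlim (fun s => F s k) G (locally (l k))) ->
  filterlim (fun s => sum_f_R0 (F s) n) G (locally (sum_f_R0 l n)).
Proof. induction n; intros H; simpl. apply H; auto.
  apply Lplus; [exact FF|apply IHn; auto|apply H; auto]. Qed.

Lemma mono_gen (W D : R -> R) :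
  (forall t, 0 < t -> is_derive W t (D t)) -> (forall t, 0 < t -> D t <= 0) ->
  filterlim W (at_right 0) (locally (W 0)) ->
  forall t t', t >= t' -> t' >= 0 -> W t <= W t' /\ W t' <= W 0.
Proof.
  intros HD HDn HL.
  assert (M : forall a b, 0 < a -> a <= b -> W b <= W a).
  { intros a b Ha Hab. destruct (Req_dec a b) as [->|Hne]; [lra|].
    destruct (MVT_cor2 W D a b) as [c [Hc1 Hc2]]; [lra| |].
    intros c Hc; apply is_derive_Reals, HD; lra.
    assert (D c <= 0) by (apply HDn; lra). nra. }
  assert (Z : forall b, 0 < b -> W b <= W 0).
  { intros b Hb. destruct (Rle_dec (W b) (W 0)) as [h|h]; auto.
    exfalso. assert (He : 0 < W b - W 0) by lra.
    specialize (HL (fun y => Rabs (y - W 0) < W b - W 0)).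
    assert (HL' : at_right 0 (fun s => Rabs (W s - W 0) < W b - W 0)).
    { apply HL. exists (mkposreal _ He). intros y Hy. exact Hy. }
    destruct HL' as [d Hd].
    set (s := Rmin (d/2) b).
    assert (Hs : 0 < s) by (unfold s; apply Rmin_glb_lt; destruct d; simpl; lra).
    assert (Hsd : s <= d/2) by apply Rmin_l.
    assert (Hsb : s <= b) by apply Rmin_r.
    assert (A1 : Rabs (W s - W 0) < W b - W 0).
    { apply Hd; auto. unfold ball; simpl; unfold AbsRing_ball, abs, minus, plus, opp; simpl.
      destruct d; simpl in *. rewrite Rabs_right; lra. }
    assert (A2 := M s b Hs Hsb).
    apply Rabs_def2 in A1. lra. }
  intros t t' H1 H2. destruct (Req_dec t' 0) as [->|Hn].
  - split; [|lra]. destruct (Req_dec t 0) as [->|]; [lra|]. apply Z; lra.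
  - split. apply M; lra. apply Z; lra.
Qed.

Lemma Lpow2 {T} (F : (T -> Prop) -> Prop) {FF : Filter F} (f : T -> R) a :
  filterlim f F (locally a) -> filterlim (fun s => f s ^ 2) F (locally (a ^ 2)).
Proof. intros H. replace (a^2) with (a*a) by ring.
  eapply filterlim_ext; [|apply Lmult; [exact FF|exact H|exact H]]. intros; simpl; ring. Qed.

Lemma Drep (f : R -> R) (x a b : R) : is_derive f x a -> a = b -> is_derive f x b.
Proof. intros H ->; exact H. Qed.

Lemma Dpow2 (f : R -> R) x a : is_derive f x a -> is_derive (fun s => f s ^ 2) x (2 * f x * a).
Proof. intros H. apply (is_derive_ext (fun s => f s * f s)). intros; simpl; ring.
  eapply Drep. apply Dmult; eauto. simpl; ring. Qed.

Lemma Dscal (f : R -> R) (x c a : R) : is_derive f x a -> is_derive (fun s => c * f s) x (c * a).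
Proof. intros H. eapply Drep. apply (Dmult (fun _ => c) f x 0 a); [apply Dconst| exact H]. ring. Qed.

Lemma sqrt_pos_inv x : 0 < sqrt x -> 0 < x.
Proof. intros H. destruct (Rle_lt_dec x 0) as [h|h]; auto. rewrite sqrt_neg_0 in H; lra. Qed.

Lemma Dterm (a b k0 k1 : R -> R) (t a' b' k0' k1' : R) :
  is_derive a t a' -> is_derive b t b' -> is_derive k0 t k0' -> is_derive k1 t k1' ->
  0 < a t ^ 2 + b t ^ 2 ->
  is_derive (fun s => / 2 * sqrt (a s ^ 2 + b s ^ 2) * (k0 s * k0 s + k1 s * k1 s)) t
    (/ 2 * ((2 * a t * a' + 2 * b t * b') / (2 * sqrt (a t ^ 2 + b t ^ 2))
             * (k0 t * k0 t + k1 t * k1 t)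
           + sqrt (a t ^ 2 + b t ^ 2) * (2 * k0 t * k0' + 2 * k1 t * k1'))).
Proof.
  intros Ha Hb H0 H1 Hp.
  assert (Hs : is_derive (fun s => sqrt (a s ^ 2 + b s ^ 2)) t
     ((2 * a t * a' + 2 * b t * b') / (2 * sqrt (a t ^ 2 + b t ^ 2)))).
  { apply (is_derive_sqrt (fun s => a s ^ 2 + b s ^ 2)); [|exact Hp].
    apply (Dplus (fun s => a s ^ 2) (fun s => b s ^ 2)). apply (Dpow2 a t a' Ha). apply (Dpow2 b t b' Hb). }
  assert (Hq : is_derive (fun s => k0 s * k0 s + k1 s * k1 s) t (2 * k0 t * k0' + 2 * k1 t * k1')).
  { eapply Drep. apply (Dplus (fun s => k0 s * k0 s) (fun s => k1 s * k1 s));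
      [apply (Dmult k0 k0 t k0' k0' H0 H0) | apply (Dmult k1 k1 t k1' k1' H1 H1)]. ring. }
  eapply Drep.
  apply (Dmult (fun s => / 2 * sqrt (a s ^ 2 + b s ^ 2)) (fun s => k0 s * k0 s + k1 s * k1 s)).
  apply (Dscal (fun s => sqrt (a s ^ 2 + b s ^ 2))). exact Hs. exact Hq. ring.
Qed.

Lemma sum5 (a c e f g : nat -> R) n :
  (forall k, (k <= n)%nat -> a k * /2 + c k - e k + f k - g k = 0) ->
  /2 * sum_f_R0 a n + sum_f_R0 c n - sum_f_R0 e n + sum_f_R0 f n - sum_f_R0 g n = 0.
Proof. intros H. rewrite scal_sum, <- plus_sum, <- !minus_sum, <- plus_sum, <- minus_sum.
  rewrite (sum_eq _ (fun _ => 0)). rewrite sum_cte. ring. auto. Qed.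

(* X^h(.,t) = (X1 t, X2 t), V^h(.,t) = V t, kappa^h(.,t) = K t (nodal values);
   dX1, dX2, dK are their time derivatives. *)
Theorem theorem3p1 (N : nat) (HN : (3 <= N)%nat)
  (X1 X2 V K dX1 dX2 dK : R -> nat -> R)
  (X01 X02 K0 : nat -> R)
  (* differentiability in time *)
  (HdX1 : forall t j, 0 < t -> is_derive (fun s => X1 s j) t (dX1 t j))
  (HdX2 : forall t j, 0 < t -> is_derive (fun s => X2 s j) t (dX2 t j))
  (HdK  : forall t j, 0 < t -> is_derive (fun s => K s j) t (dK t j))
  (* (right-)continuity at t = 0 *)
  (HcX1 : forall j, filterlim (fun s => X1 s j) (at_right 0) (locally (X1 0 j)))
  (HcX2 : forall j, filterlim (fun s => X2 s j) (at_right 0) (locally (X2 0 j)))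
  (HcK  : forall j, filterlim (fun s => K s j) (at_right 0) (locally (K 0 j)))
  (* nondegenerate polygon *)
  (Hlen : forall t k, 0 <= t -> (k < N)%nat -> 0 < elen N (X1 t) (X2 t) k)
  (* first equation *)
  (Heq1 : forall t, 0 < t -> forall phi : nat -> R,
     lump N (X1 t) (X2 t)
       (pmul (padd (pmul (nrm1 N (X1 t) (X2 t)) (lift N (dX1 t)))
                   (pmul (nrm2 N (X1 t) (X2 t)) (lift N (dX2 t))))
             (lift N phi))
     = lump N (X1 t) (X2 t) (pmul (lift N (V t)) (lift N phi)))
  (* second equation *)
  (Heq2 : forall t, 0 < t -> forall om1 om2 : nat -> R,
     lump N (X1 t) (X2 t)
       (padd (pmul (pmul (lift N (V t)) (nrm1 N (X1 t) (X2 t))) (lift N om1))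
             (pmul (pmul (lift N (V t)) (nrm2 N (X1 t) (X2 t))) (lift N om2)))
     = lump N (X1 t) (X2 t)
       (padd
         (pmul (padd (popp (pmul (ds N (X1 t) (X2 t) (K t)) (nrm1 N (X1 t) (X2 t))))
                     (pscal (/ 2) (pmul (pmul (lift N (K t)) (lift N (K t)))
                                        (ds N (X1 t) (X2 t) (X1 t)))))
               (ds N (X1 t) (X2 t) om1))
         (pmul (padd (popp (pmul (ds N (X1 t) (X2 t) (K t)) (nrm2 N (X1 t) (X2 t))))
                     (pscal (/ 2) (pmul (pmul (lift N (K t)) (lift N (K t)))
                                        (ds N (X1 t) (X2 t) (X2 t)))))
               (ds N (X1 t) (X2 t) om2))))
  (* third equation *)
  (Heq3 : forall t, 0 < t -> forall psi : nat -> R,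
     lump N (X1 t) (X2 t) (pmul (lift N (dK t)) (lift N psi))
     = lump N (X1 t) (X2 t)
         (pmul (padd (pmul (nrm1 N (X1 t) (X2 t)) (ds N (X1 t) (X2 t) (dX1 t)))
                     (pmul (nrm2 N (X1 t) (X2 t)) (ds N (X1 t) (X2 t) (dX2 t))))
               (ds N (X1 t) (X2 t) psi))
       - lump N (X1 t) (X2 t)
         (pmul (pmul (padd (pmul (ds N (X1 t) (X2 t) (X1 t)) (ds N (X1 t) (X2 t) (dX1 t)))
                           (pmul (ds N (X1 t) (X2 t) (X2 t)) (ds N (X1 t) (X2 t) (dX2 t))))
                     (lift N (K t)))
               (lift N psi)))
  (* initial data *)
  (HX10 : forall j, X1 0 j = X01 j)
  (HX20 : forall j, X2 0 j = X02 j)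
  (HK0  : forall j, K 0 j = K0 j) :
  forall t t', t >= t' -> t' >= 0 ->
    Wh N (X1 t) (X2 t) (K t) <= Wh N (X1 t') (X2 t') (K t') /\
    Wh N (X1 t') (X2 t') (K t') <= Wh N X01 X02 K0.
Proof.
  intros t0 t0' Ht Ht'.
  assert (HX01 : X01 = X1 0) by (apply functional_extensionality; intros; now rewrite HX10).
  assert (HX02 : X02 = X2 0) by (apply functional_extensionality; intros; now rewrite HX20).
  assert (HK00 : K0 = K 0) by (apply functional_extensionality; intros; now rewrite HK0).
  subst X01 X02 K0.
  set (Wc := fun s => / 2 * sum_f_R0 (fun k => / 2 * elen N (X1 s) (X2 s) k *
      (nd N (K s) k * nd N (K s) k + nd N (K s) (S k) * nd N (K s) (S k))) (pred N)).
  assert (HW : forall s, Wh N (X1 s) (X2 s) (K s) = Wc s).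
  { intros s. unfold Wh, lump, Wc. f_equal. apply sum_eq. intros i _.
    unfold pmul, lift, pone. ring. }
  rewrite !HW.
  apply (mono_gen Wc (fun t => - lump N (X1 t) (X2 t) (pmul (lift N (V t)) (lift N (V t))))).
  - intros t Ht0.
    assert (E1 := Heq1 t Ht0 (V t)). assert (E2 := Heq2 t Ht0 (dX1 t) (dX2 t)).
    assert (E3 := Heq3 t Ht0 (K t)).
    eapply Drep.
    { unfold Wc. apply Dscal. apply Dsum. intros k Hk.
      assert (HL := Hlen t k (Rlt_le _ _ Ht0) ltac:(lia)).
      unfold elen, hcomp, nd in HL |- *.
      apply (Dterm (fun s => X1 s (S k mod N) - X1 s (k mod N))
                   (fun s => X2 s (S k mod N) - X2 s (k mod N))
                   (fun s => K s (k mod N)) (fun s => K s (S k mod N))).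
      apply (Dminus (fun s => X1 s (S k mod N)) (fun s => X1 s (k mod N))); apply HdX1; exact Ht0.
      apply (Dminus (fun s => X2 s (S k mod N)) (fun s => X2 s (k mod N))); apply HdX2; exact Ht0.
      apply HdK; exact Ht0. apply HdK; exact Ht0.
      apply sqrt_pos_inv; exact HL. }
    match goal with |- / 2 * sum_f_R0 ?D _ = _ =>
    match type of E1 with ?FV = ?VV => match type of E2 with ?C = ?E =>
    match type of E3 with ?DKK = ?A - ?B =>
      assert (E1' : FV = C);
      [ unfold lump; apply sum_eq; intros; unfold pmul, padd, lift; ring
      | enough (Z : / 2 * sum_f_R0 D (pred N) + E - DKK + A - B = 0) by lra ]
    end end end end.
    unfold lump. apply sum5. intros k Hk.
    assert (HL := Hlen t k (Rlt_le _ _ Ht0) ltac:(lia)).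
    unfold pmul, padd, popp, pscal, lift, ds, nrm1, nrm2, elen, hcomp, nd in HL |- *.
    simpl in HL |- *. field. lra.
  - intros t _. cut (0 <= lump N (X1 t) (X2 t) (pmul (lift N (V t)) (lift N (V t)))). lra.
    unfold lump. apply cond_pos_sum. intros k. unfold pmul.
    assert (0 <= elen N (X1 t) (X2 t) k) by apply sqrt_pos. nra.
  - unfold Wc. unfold elen, hcomp, nd.
    apply Lmult; [apply filter_filter|apply Lconst; apply filter_filter|].
    apply Lsum; [apply filter_filter|]. intros k _.
    repeat first [ apply Lmult | apply Lminus | apply Lplus | apply Lopp | apply Rplus_le_le_0_compat | apply pow2_ge_0 | apply Lpow2 | apply Lsqrt | apply Lconst
                 | apply HcX1 | apply HcX2 | apply HcK | apply filter_filter ].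
  - exact Ht.
  - exact Ht'.
Qed.
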